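(* Let $A,B\in\mathbb{C}$ with $4A^3+27B^2\neq0$, and let $C=\{(x,y)\in\mathbb{C}^2: y^2=x^3+Ax+B\}$ be the corresponding smooth affine cubic curve. Then for every polynomial $P\in\mathbb{C}[x,y]$ the restriction $P|_C:C\to\mathbb{C}$ has at least one critical point on $C$, i.e. there is a point of $C$ at which the differential of $P|_C$ vanishes.
   Context: The curve $C$ is parametrized as $t\mapsto(x(t),y(t))$, $t\in\mathbb{C}\setminus\Gamma$, where $\Gamma\subset\mathbb{C}$ is a lattice of rank two and $x,y$ are $\Gamma$-periodic meromorphic (elliptic) functions, holomorphic on $\mathbb{C}\setminus\Gamma$ with poles at the points of $\Gamma$, satisfying $y^2=x^3+Ax+B$; this parametrization is a local biholomorphism onto $C$. *)

(* Defs.v *)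
From HB Require Import structures.
From mathcomp Require Import all_boot all_order all_algebra.
From mathcomp Require Import reals.
From mathcomp Require Import complex.
From mathcomp Require Import mpoly.
Set Implicit Arguments. Unset Strict Implicit. Unset Printing Implicit Defensive.
Import Order.TTheory GRing.Theory Num.Theory.
Local Open Scope ring_scope.

Definition pt2 (K : Type) (x y : K) : 'I_2 -> K :=
  fun i => if val i == 0%N then x else y.

Definition weierF (K : fieldType) (A B : K) : {mpoly K[2]} :=
  'X_(1 : 'I_2) ^+ 2 - 'X_(0 : 'I_2) ^+ 3 - A *: 'X_(0 : 'I_2) - B%:MP.

Definition on_curve (K : fieldType) (A B x y : K) : Prop :=
  y ^+ 2 = x ^+ 3 + A * x + B.

Definition dpoly (K : fieldType) (P : {mpoly K[2]}) (x y v0 v1 : K) : K :=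
  (mderiv (0 : 'I_2) P).@[pt2 x y] * v0 + (mderiv (1 : 'I_2) P).@[pt2 x y] * v1.

(* (x,y) is a critical point of P restricted to the smooth curve C:
   the differential of P vanishes on the tangent line T_(x,y) C = ker dF(x,y). *)
Definition crit_on_curve (K : fieldType) (A B : K) (P : {mpoly K[2]}) (x y : K) : Prop :=
  on_curve A B x y /\
  forall v0 v1 : K, dpoly (weierF A B) x y v0 v1 = 0 -> dpoly P x y v0 v1 = 0.

(* Main.v *)
Require Import Defs.
From HB Require Import structures.
From mathcomp Require Import all_boot all_order all_algebra.
From mathcomp Require Import reals.
From mathcomp Require Import complex.
From mathcomp Require Import mpoly.
From mathcomp Require Import ring zify.
Import Order.TTheory GRing.Theory Num.Theory.
Local Open Scope ring_scope.

Ltac hs1 := rewrite ?deriv0 ?derivC ?hornerD ?hornerN ?hornerM ?hornerZ ?hornerMn ?hornerC ?hornerX ?hornerXn ?horner0.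
Ltac hs := hs1; hs1; hs1.

Section Main.
Variable K : numClosedFieldType.
Variables A B : K.

Definition fW : {poly K} := locked ('X^3 + A *: 'X + B%:P).

Lemma fW_horner x : fW.[x] = x ^+ 3 + A * x + B.
Proof. by rewrite /fW -lock; hs. Qed.

Lemma fWd_horner x : fW^`().[x] = 3%:R * x ^+ 2 + A.
Proof.
rewrite /fW -lock !derivD derivZ derivX derivC derivXn /= addr0 alg_polyC hornerD hornerC hornerMn hornerXn.
by rewrite -mulr_natl.
Qed.

Lemma mderivXU (i j : 'I_2) :
  mderiv i ('X_j : {mpoly K[2]}) = (i == j)%:R%:MP.
Proof.
rewrite mderivX mnm1E eq_sym; case: eqP => [->|_].
  have -> : (U_(j) - U_(j) = 0)%MM by apply/mnmP => k; rewrite !mnmE subnn.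
  by rewrite mpolyX0 scale1r.
by rewrite scale0r.
Qed.

Definition JP (P : {mpoly K[2]}) x y :=
  (mderiv 0 P).@[pt2 x y] * (2 * y) + (mderiv 1 P).@[pt2 x y] * fW^`().[x].

Definition good (P : {mpoly K[2]}) := exists p q : {poly K},
  forall x y, y ^+ 2 = fW.[x] ->
   P.@[pt2 x y] = p.[x] + q.[x] * y :> K /\
   JP P x y = 2 * p^`().[x] * y + (2 * fW.[x] * q^`().[x] + fW^`().[x] * q.[x]) :> K.

Lemma goodC c : good c%:MP.
Proof.
exists c%:P, 0 => x y _; rewrite /JP !mderivC !mevalC derivC; hs.
split; ring.
Qed.

Lemma goodD P Q : good P -> good Q -> good (P + Q).
Proof.
move=> [p1 [q1 H1]] [p2 [q2 H2]]; exists (p1 + p2), (q1 + q2) => x y Hy.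
have [V1 J1] := H1 x y Hy; have [V2 J2] := H2 x y Hy.
move: J1 J2; rewrite /JP !mderivD !mevalD V1 V2 !derivD !hornerD => J1 J2.
split; first ring.
rewrite mulrDl (mulrDl (meval _ _)) addrACA J1 J2; ring.
Qed.

Lemma goodM P Q : good P -> good Q -> good (P * Q).
Proof.
move=> [p1 [q1 H1]] [p2 [q2 H2]].
exists (p1 * p2 + q1 * q2 * fW), (p1 * q2 + p2 * q1) => x y Hy.
have [V1 J1] := H1 x y Hy; have [V2 J2] := H2 x y Hy.
move: J1 J2; rewrite /JP !mderivM !mevalD !mevalM V1 V2 !derivD !derivM !hornerD !hornerM => J1 J2.
have -> : ((mderiv 0 P).@[pt2 x y] * (p2.[x] + q2.[x] * y) +
   (p1.[x] + q1.[x] * y) * (mderiv 0 Q).@[pt2 x y]) * (2 * y) +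
  ((mderiv 1 P).@[pt2 x y] * (p2.[x] + q2.[x] * y) +
   (p1.[x] + q1.[x] * y) * (mderiv 1 Q).@[pt2 x y]) * fW^`().[x]
  = (p2.[x] + q2.[x] * y) * JP P x y + (p1.[x] + q1.[x] * y) * JP Q x y by rewrite /JP; ring.
rewrite /JP J1 J2 -Hy; hs; split; ring.
Qed.

Lemma goodX0 : good 'X_0.
Proof.
exists 'X, 0 => x y _; rewrite /JP !mderivXU /= !mevalC mevalXU derivX; hs; rewrite /pt2 /=.
split; ring.
Qed.

Lemma goodX1 : good 'X_1.
Proof.
exists 0, 1 => x y _; rewrite /JP !mderivXU /= !mevalC mevalXU derivC; hs; rewrite /pt2 /=.
split; ring.
Qed.

Lemma good_all P : good P.
Proof.
elim/mpolyind: P => [|c m p _ _ Hp]; first by rewrite -mpolyC0; apply: goodC.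
apply: goodD => //; rewrite -mul_mpolyC; apply: goodM; first exact: goodC.
rewrite mpolyXE_id; apply: big_ind => //; first by rewrite -mpolyC1; apply: goodC.
  exact: goodM.
move=> i _.
have Hi : good 'X_i.
  case: i => [[|[|i]] Hi] //.
    have -> : Ordinal Hi = 0 by apply: val_inj.
    exact: goodX0.
  have -> : Ordinal Hi = 1 by apply: val_inj.
  exact: goodX1.
elim: (m i) => [|k IH]; first by rewrite expr0 -mpolyC1; apply: goodC.
by rewrite exprS; apply: goodM.
Qed.


Lemma weier_d0 x y : (mderiv 0 (weierF A B)).@[pt2 x y] = - (3%:R * x ^+ 2 + A).
Proof.
rewrite /weierF !mderivB mderivZ mderivC [_ ^+ 3]exprS !expr2 !mderivM !mderivXU /=.
do 3 rewrite ?mevalB ?mevalD ?mevalM ?mevalZ ?mevalC ?mevalXU; rewrite /pt2 /=; ring.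
Qed.

Lemma weier_d1 x y : (mderiv 1 (weierF A B)).@[pt2 x y] = 2 * y.
Proof.
rewrite /weierF !mderivB mderivZ mderivC [_ ^+ 3]exprS !expr2 !mderivM !mderivXU /=.
do 3 rewrite ?mevalB ?mevalD ?mevalM ?mevalZ ?mevalC ?mevalXU; rewrite /pt2 /=; ring.
Qed.

Lemma disc_ne0 x : 4 * A ^+ 3 + 27 * B ^+ 2 != 0 ->
  x ^+ 3 + A * x + B = 0 -> 3%:R * x ^+ 2 + A <> 0.
Proof.
move=> HD H1 H2; move/eqP: HD; apply.
have eA : A = (3%:R * x ^+ 2 + A) - 3%:R * x ^+ 2 by ring.
have eB : B = (x ^+ 3 + A * x + B) - x ^+ 3 - A * x by ring.
rewrite H1 in eB; rewrite H2 in eA; rewrite eB eA; ring.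
Qed.

Lemma crit_of_J P x y : 4 * A ^+ 3 + 27 * B ^+ 2 != 0 ->
  on_curve A B x y -> JP P x y = 0 -> crit_on_curve A B P x y.
Proof.
move=> HD Hc HJ; split => // v0 v1; rewrite /dpoly weier_d0 weier_d1.
move: HJ; rewrite /JP fWd_horner.
set Px := (mderiv 0 P).@[_]; set Py := (mderiv 1 P).@[_]; set fd := _ + A.
move=> HJ Hv.
have [y0|yn0] := eqVneq y 0.
  have Hf : x ^+ 3 + A * x + B = 0 by rewrite -Hc y0 expr0n.
  have Hfd := disc_ne0 x HD Hf; rewrite -/fd in Hfd.
  move: Hv HJ; rewrite y0 mulr0 mul0r addr0 mulr0 add0r => /eqP.
  rewrite mulNr oppr_eq0 mulf_eq0 (negPf (introN eqP Hfd)) /= => /eqP ->.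
  move/eqP; rewrite mulf_eq0 (negPf (introN eqP Hfd)) orbF => /eqP ->.
  ring.
have h2y : 2 * y != 0 by rewrite mulf_neq0 ?pnatr_eq0.
have E : 2 * y * (Px * v0 + Py * v1) = 0.
  have -> : 2 * y * (Px * v0 + Py * v1) = v0 * (Px * (2 * y) + Py * fd) + Py * (- fd * v0 + 2 * y * v1) by ring.
  by rewrite HJ Hv !mulr0 addr0.
by move/eqP: E; rewrite mulf_eq0 (negPf h2y) => /eqP.
Qed.

Lemma fW_expand : fW = 'X^3 + (A *: 'X + B%:P).
Proof. by rewrite /fW -lock addrA. Qed.

Lemma fWd_eq : fW^`() = 3%:R *: 'X^2 + A%:P.
Proof.
rewrite /fW -lock !derivD derivZ derivX derivC derivXn /= addr0 alg_polyC.
by rewrite -scaler_nat.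
Qed.

Lemma coef_a q : q != 0 ->
  (2%:R *: (fW * q^`()) + fW^`() * q)`_((size q).-1.+2) =
  lead_coef q *+ (2 * (size q).-1 + 3).
Proof.
move=> q0; rewrite lead_coefE; set n := (size q).-1.
have hs : size q = n.+1 by rewrite /n prednK // size_poly_gt0.
have z k : (n < k)%N -> q`_k = 0 by move=> hk; rewrite nth_default // hs.
rewrite fWd_eq fW_expand !mulrDl -!scalerAl !mul_polyC !coefD !coefZ !coefD !coefZ coefXnM coefXnM coefXM.
rewrite !coef_deriv /= (@nth_default _ 0 q n.+2) ?hs // (@nth_default _ 0 q n.+3); last by rewrite hs; lia.
case En: n => [|m] /=.
  rewrite (_ : (2 - 2 = 0)%N) //; ring.
rewrite (_ : (m.+3 - 3 = m)%N); last by lia.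
rewrite (_ : (m.+3 - 2 = m.+1)%N); last by lia.
ring.
Qed.

Lemma size_fW : size fW = 4%N.
Proof.
rewrite fW_expand size_polyDl size_polyXn //.
apply: (leq_ltn_trans (size_polyD _ _)); rewrite gtn_max.
rewrite (leq_ltn_trans (size_scale_leq _ _)) ?size_polyX //.
by rewrite (leq_ltn_trans (size_polyC_leq1 _)).
Qed.

Lemma fW_neq0 : fW != 0.
Proof. by rewrite -size_poly_gt0 size_fW. Qed.

Lemma size_subneq (u v : {poly K}) : size u != size v ->
  size (u - v) = maxn (size u) (size v).
Proof.
case: (ltngtP (size u) (size v)) => H // _.
  by rewrite addrC size_polyDl size_polyN ?(maxn_idPr (ltnW H)).
by rewrite size_polyDl ?size_polyN ?(maxn_idPl (ltnW H)).
Qed.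

Lemma size_sq (u : {poly K}) : u != 0 -> size (u ^+ 2) = ((size u).-1 * 2).+1.
Proof.
move=> u0; rewrite -size_exp prednK // size_poly_gt0 expf_neq0 //.
Qed.

Lemma mainK P : 4 * A ^+ 3 + 27 * B ^+ 2 != 0 -> exists x y, crit_on_curve A B P x y.
Proof.
move=> HD; have [p [q H]] := good_all P.
pose b := 2%:R *: p^`(); pose a := 2%:R *: (fW * q^`()) + fW^`() * q.
have HJ x y : y ^+ 2 = fW.[x] -> JP P x y = b.[x] * y + a.[x].
  by move=> Hy; have [_ ->] := H x y Hy; rewrite /a /b; hs; ring.
have oc x y : y ^+ 2 = fW.[x] -> on_curve A B x y by rewrite /on_curve -fW_horner.
pose N := a ^+ 2 - b ^+ 2 * fW.
have [[x0 Hr]|Hs] := altP (closed_rootP N).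
  set y0 := sqrtC fW.[x0].
  have Hy0 : y0 ^+ 2 = fW.[x0] := sqrtCK _.
  have Hy1 : (- y0) ^+ 2 = fW.[x0] by rewrite sqrrN.
  have : (a.[x0] + b.[x0] * y0) * (a.[x0] + b.[x0] * (- y0)) = 0.
    move/rootP: Hr; rewrite /N; hs; rewrite -Hy0 => <-; ring.
  move/eqP; rewrite mulf_eq0 => /orP [] /eqP E.
    exists x0, y0; apply: crit_of_J => //; first exact: oc.
    by rewrite HJ // addrC.
  exists x0, (- y0); apply: crit_of_J => //; first exact: oc.
  by rewrite HJ // addrC.
exfalso; move/negPn/eqP: Hs => Hs.
have b0 : b = 0.
  apply/eqP/negPn/negP => bn0.
  have sb : size (b ^+ 2 * fW) = (2 * (size b).-1 + 4)%N.
    rewrite size_mul ?expf_neq0 ?fW_neq0 // size_sq // size_fW; lia.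
  have sa : size (a ^+ 2) != size (b ^+ 2 * fW).
    rewrite sb; have [->|an0] := eqVneq a 0; first by rewrite expr2 mul0r size_poly0; lia.
    rewrite size_sq //; lia.
  move: Hs; rewrite /N size_subneq // sb; lia.
have Na : N = a ^+ 2 by rewrite /N b0 [0 ^+ 2]expr2 !mul0r subr0.
have an0 : a != 0.
  by apply/eqP => a0; move: Hs; rewrite Na a0 expr2 mul0r size_poly0.
have sa1 : size a = 1%N.
  move: Hs; rewrite Na size_sq //; have := size_poly_gt0 a; rewrite an0; lia.
have q0 : q != 0.
  apply/eqP => q0; move/eqP: an0; apply; rewrite /a q0 deriv0 !mulr0 scaler0 addr0 //.
have := coef_a q q0; rewrite -/a nth_default ?sa1 //.
move/eqP; rewrite eq_sym mulrn_eq0 lead_coef_eq0 (negPf q0) orbF.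
lia.
Qed.

End Main.

Theorem mainTheorem6 (R : realType) (A B : R[i]) (P : {mpoly R[i][2]}) :
  4 * A ^+ 3 + 27 * B ^+ 2 != 0 ->
  exists x y : R[i], crit_on_curve A B P x y.
Proof. exact: mainK. Qed.
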